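(* Let $\mathcal S$ be a split system on $X$ that is circular with respect to a circular ordering $\pi_1$ of $X$, and let $\pi_2$ be another circular ordering of $X$. Then $\mathcal S$ is circular with respect to $\pi_2$ if and only if $\pi_2$ can be obtained from $\pi_1$ by a finite sequence of twists, each of which is admissible for $\mathcal S$ with respect to the ordering current at that step.
   Context: $X$ is a finite set of $n\ge 4$ labels. A split of $X$ is an unordered partition $\{A,B\}$ of $X$ into two nonempty sets; a split system is a set of splits. Two splits $\{A_1,B_1\}$, $\{A_2,B_2\}$ are compatible if at least one of $A_1\cap A_2$, $A_1\cap B_2$, $B_1\cap A_2$, $B_1\cap B_2$ is empty. A circular ordering of $X$ is a cyclic arrangement $\pi=(x_1,\dots,x_n)$ of the elements of $X$, considered up to rotation and reflection. A split is circular with respect to $\pi$ if it is of the form $\{\{x_{i+1},\dots,x_j\},\,X\setminus\{x_{i+1},\dots,x_j\}\}$ (indices mod $n$); a split system is circular with respect to $\pi$ if all its splits are. (Geometrically: label the edges of a regular $n$-gon cyclically by $x_1,\dots,x_n$; nontrivial splits circular w.r.t. $\pi$ are the diagonals, a diagonal separating the edge labels into the two parts; two such diagonals cross iff the splits are incompatible.) For a set $I=\{x_{i+1},\dots,x_j\}$ of cyclically consecutive elements of $\pi$ with $2\le |I|\le n-2$, the twist of $\pi$ along $I$ is the circular ordering $(x_1,\dots,x_i,x_j,x_{j-1},\dots,x_{i+1},x_{j+1},\dots,x_n)$ obtained by reversing the block $I$ (geometrically: cut the labeled polygon along the diagonal of $\{I,X\setminus I\}$, reflect one piece and reglue). Such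 a twist is admissible for a split system $\mathcal S$ circular w.r.t. $\pi$ if the split $\{I,X\setminus I\}$ (which may or may not belong to $\mathcal S$) is compatible with every split of $\mathcal S$, i.e. its diagonal crosses no diagonal representing $\mathcal S$. *)

(* Defs.v *)
From mathcomp Require Import all_boot.
Set Implicit Arguments. Unset Strict Implicit. Unset Printing Implicit Defensive.

Section Splits.
Variable X : finType.

Definition is_split (P : {set {set X}}) : bool :=
  partition P [set: X] && (#|P| == 2).

Definition compatible (P Q : {set {set X}}) : Prop :=
  exists A B, [/\ A \in P, B \in Q & A :&: B = set0].

(* A circular ordering is represented by a sequence s listing every element of X
   once (perm_eq s (enum X)); two representatives denote the same circular
   ordering iff they differ by rotation and/or reflection. *)
Definition is_ordering (s : seq X) : bool := perm_eq s (enum X).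

Definition circ_equiv (s t : seq X) : Prop :=
  exists k, t = rot k s \/ t = rot k (rev s).

Definition interval (s : seq X) (k l : nat) : {set X} := [set x in take l (rot k s)].

Definition split_of (I : {set X}) : {set {set X}} := [set I; ~: I].

Definition circular_split (s : seq X) (P : {set {set X}}) : Prop :=
  exists k l, [/\ 0 < l, l < #|X| & P = split_of (interval s k l)].

Definition circular (S : {set {set {set X}}}) (s : seq X) : Prop :=
  forall P, P \in S -> circular_split s P.

Definition twist (s : seq X) (k l : nat) : seq X :=
  rev (take l (rot k s)) ++ drop l (rot k s).

Definition adm_twist_step (S : {set {set {set X}}}) (s t : seq X) : Prop :=
  exists k l, [/\ 2 <= l, l <= #|X| - 2,
     (forall P, P \in S -> compatible (split_of (interval s k l)) P)
   & circ_equiv (twist s k l) t].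

Inductive twist_reach (S : {set {set {set X}}}) : seq X -> seq X -> Prop :=
  | tr_refl s t : circ_equiv s t -> twist_reach S s t
  | tr_step s u t : adm_twist_step S s u -> twist_reach S u t -> twist_reach S s t.

End Splits.

(* Main.v *)
Require Import Defs.
From mathcomp Require Import all_boot.
From mathcomp Require Import zify.
From Stdlib Require Import Classical ClassicalEpsilon.
Set Implicit Arguments. Unset Strict Implicit. Unset Printing Implicit Defensive.

Definition bet (i k j : nat) : bool := (i < j < k) || (k < j < i).

Lemma bet_rev m a b c : a <= m -> b <= m -> c <= m -> bet (m-a) (m-c) (m-b) = bet a c b.
Proof. rewrite /bet => *. apply/idP/idP; lia. Qed.

Lemma bet_rot n k a b c : a < n -> b < n -> c < n -> k <= n -> a != b -> b != c ->
  bet (if a < k then a + n - k else a - k) (if c < k then c + n - k else c - k)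
      (if b < k then b + n - k else b - k) = bet a c b (+) ((a<k) != (c<k)).
Proof. rewrite /bet => *. case: (ltnP a k); case: (ltnP b k); case: (ltnP c k) => /= *; apply/idP/idP; lia. Qed.

Lemma bet_tw l a b c : a != b -> b != c ->
  bet (if a < l then l.-1 - a else a) (if c < l then l.-1 - c else c)
      (if b < l then l.-1 - b else b) = bet a c b (+) (((a<l) != (c<l)) && (b < l)).
Proof. rewrite /bet => *. case: (ltnP a l); case: (ltnP b l); case: (ltnP c l) => /= *; apply/idP/idP; lia. Qed.

Section Basics.
Variable X : finType.
Local Notation n := #|X|.
Implicit Types (s w : seq X) (x y : X).

Definition pos (s : seq X) (x : X) := index x s.

Lemma ord_size s : is_ordering s -> size s = n.
Proof. by move=> h; rewrite (perm_size h) cardE. Qed.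
Lemma ord_uniq s : is_ordering s -> uniq s.
Proof. by move=> h; rewrite (perm_uniq h) enum_uniq. Qed.
Lemma ord_mem s x : is_ordering s -> x \in s.
Proof. by move=> h; rewrite (perm_mem h) mem_enum. Qed.

Lemma pos_lt s x : is_ordering s -> pos s x < n.
Proof. by move=> h; rewrite -(ord_size h) index_mem ord_mem. Qed.

Lemma pos_inj s x y : is_ordering s -> pos s x = pos s y -> x = y.
Proof.
move=> h e; rewrite -(nth_index x (ord_mem x h)) -(nth_index x (ord_mem y h)).
by rewrite /pos in e; rewrite e.
Qed.

Lemma pos_surj s i : is_ordering s -> i < n -> exists x, pos s x = i.
Proof.
move=> h lt; case: s h lt => [|x0 s'] h lt.
  by move: (ord_size h) lt => /= <-.
exists (nth x0 (x0 :: s') i); rewrite /pos index_uniq //.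
  by rewrite (ord_size h). by apply: ord_uniq.
Qed.

Lemma ord_rot s k : is_ordering s -> is_ordering (rot k s).
Proof. by rewrite /is_ordering perm_rot. Qed.
Lemma ord_rev s : is_ordering s -> is_ordering (rev s).
Proof. by rewrite /is_ordering perm_rev. Qed.

Lemma index_drop (w : seq X) l x : uniq w -> x \in w -> l <= index x w ->
  index x (drop l w) = index x w - l.
Proof.
move=> u xin le.
have hi : index x w < size w by rewrite index_mem.
have hl : l <= size w by lia.
have e := index_cat x (take l w) (drop l w); rewrite cat_take_drop in e.
have nt : (x \in take l w) = false by rewrite in_take_leq // ltnNge le.
move: e; rewrite nt size_take; case: ltnP => h e. lia. by move: hi; rewrite e -{2}[size w]addn0 ltn_add2l.
Qed.

Lemma index_take (w : seq X) l x : index x w < l -> index x (take l w) = index x w.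
Proof.
move=> lt.
have := index_cat x (take l w) (drop l w); rewrite cat_take_drop.
case: ifP => // hin e.
have hs : size w <= l.
  case: (leqP (size w) l) => // h; move: lt; rewrite e size_take h; lia.
by rewrite take_oversize.
Qed.

Lemma mem_drop_idx w l x : uniq w -> x \in w -> (x \in drop l w) = (l <= index x w).
Proof.
move=> u xin.
have dis : ~~ has (mem (take l w)) (drop l w).
  by move: u; rewrite -{1}(cat_take_drop l w) cat_uniq => /and3P [].
have xin' : (x \in take l w) || (x \in drop l w) by rewrite -mem_cat cat_take_drop.
case: (leqP l (index x w)) => h.
  have nt : (x \in take l w) = false by rewrite in_take // ltnNge h.
  by move: xin'; rewrite nt.
have t : x \in take l w by rewrite in_take.
apply/negbTE; apply: contraNN dis => d; apply/hasP; exists x => //.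
Qed.

Lemma pos_rot s k x : is_ordering s -> k <= n ->
  pos (rot k s) x = if pos s x < k then pos s x + n - k else pos s x - k.
Proof.
move=> h hk; rewrite /pos /rot.
have u := ord_uniq h; have xin := ord_mem x h; have sz := ord_size h.
have hi : index x s < n by rewrite -sz index_mem.
rewrite index_cat mem_drop_idx //.
case: (leqP k (index x s)) => c.
  by rewrite index_drop.
rewrite index_take // size_drop sz. lia.
Qed.

Lemma pos_rev s x : is_ordering s -> pos (rev s) x = n.-1 - pos s x.
Proof.
move=> h; have u := ord_uniq h; have xin := ord_mem x h; have sz := ord_size h.
have hi : index x s < n by rewrite -sz index_mem.
have hr : n.-1 - index x s < size (rev s) by rewrite size_rev sz; lia.
rewrite /pos -{1}(nth_index x xin) -{1}(subKn (ltnW hi)).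
have -> : n - index x s = (n.-1 - index x s).+1 by lia.
rewrite -sz -nth_rev; last by rewrite sz; lia.
by rewrite index_uniq // ?rev_uniq // size_rev sz; lia.
Qed.

Definition tw w l := rev (take l w) ++ drop l w.

Lemma ord_tw w l : is_ordering w -> is_ordering (tw w l).
Proof.
move=> h; rewrite /is_ordering /tw.
apply: perm_trans h; rewrite -{3}(cat_take_drop l w).
by rewrite perm_cat2r perm_rev.
Qed.

Lemma pos_tw w l x : is_ordering w -> l <= n ->
  pos (tw w l) x = if pos w x < l then l.-1 - pos w x else pos w x.
Proof.
move=> h hl; have u := ord_uniq h; have xin := ord_mem x h; have sz := ord_size h.
have hi : index x w < n by rewrite -sz index_mem.
rewrite /pos /tw index_cat mem_rev in_take //.
case: ltnP => c.
  have ut : uniq (take l w) by apply: take_uniq.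
  have xt : x \in take l w by rewrite in_take.
  have st : size (take l w) = l by rewrite size_take sz; case: ltnP => //; lia.
  have hr : l.-1 - index x w < size (rev (take l w)) by rewrite size_rev st; lia.
  have ex : x = nth x (rev (take l w)) (l.-1 - index x w).
    rewrite nth_rev; last by rewrite st; lia.
    rewrite st nth_take; last by lia.
    have -> : l - (l.-1 - index x w).+1 = index x w by lia.
    by rewrite nth_index.
  rewrite {1}ex index_uniq ?rev_uniq // size_rev st; lia.
rewrite size_rev size_take sz index_drop //.
case: ltnP => c2; lia.
Qed.

Lemma tw_def s k l : twist s k l = tw (rot k s) l.
Proof. by []. Qed.

Lemma mem_interval s k l x : is_ordering s ->
  (x \in interval s k l) = (pos (rot k s) x < l).
Proof.
move=> h; rewrite /interval inE in_take //; apply: ord_mem; exact: ord_rot.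
Qed.

End Basics.

Section Arcs.
Variable X : finType.
Local Notation n := #|X|.
Implicit Types (s w : seq X) (x y : X) (A B K I : {set X}).

Definition arcA s A : Prop := forall a b c d, a \in A -> b \notin A -> c \in A -> d \notin A ->
  bet (pos s a) (pos s c) (pos s b) = bet (pos s a) (pos s c) (pos s d).

Definition rng s A lo hi : Prop := forall x, (x \in A) = (lo <= pos s x < hi).

Definition arcR s A : Prop := exists lo hi, hi <= n /\ (rng s A lo hi \/ rng s (~: A) lo hi).

Lemma arcR_arcA s A : arcR s A -> arcA s A.
Proof.
move=> [lo [hi [hn [r|r]]]] a b c d ha hb hc hd.
  move: ha hb hc hd; rewrite !r /bet => *; apply/idP/idP; lia.
have r' : forall x, (x \in A) = ~~ (lo <= pos s x < hi) by move=> x; rewrite -r inE negbK.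
move: ha hb hc hd; rewrite !r' /bet => *; apply/idP/idP; lia.
Qed.

Lemma convex_rng s B : is_ordering s ->
  (forall (u v w : X), u \in B -> v \notin B -> w \in B -> ~~ (pos s u < pos s v < pos s w)) ->
  exists lo hi, hi <= n /\ rng s B lo hi.
Proof.
move=> h cv.
case: (set_0Vmem B) => [->|[x0 x0B]].
  by exists 0, 0; split => // x; rewrite inE; lia.
pose xm := [arg min_(x < x0 in B) pos s x].
pose xM := [arg max_(x > x0 in B) pos s x].
have [xmB xmP] : xm \in B /\ forall y, y \in B -> pos s xm <= pos s y.
  by rewrite /xm; case: arg_minnP.
have [xMB xMP] : xM \in B /\ forall y, y \in B -> pos s y <= pos s xM.
  by rewrite /xM; case: arg_maxnP.
exists (pos s xm), (pos s xM).+1; split; first exact: pos_lt.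
move=> x; apply/idP/idP.
  by move=> xB; rewrite xmP // ltnS xMP.
move=> /andP [h1 h2]; apply/negPn/negP => xnB.
have := cv _ _ _ xmB xnB xMB.
case: (ltngtP (pos s xm) (pos s x)) => [e1|e1|e1]; last first.
- by move: xnB; rewrite -(pos_inj h e1) xmB.
- by move: h1; rewrite leqNgt e1.
case: (ltngtP (pos s x) (pos s xM)) => [e2|e2|e2].
- by [].
- by move: h2; rewrite ltnS leqNgt e2.
- by move: xnB; rewrite (pos_inj h e2) xMB.
Qed.

Lemma arcA_arcR s A : is_ordering s -> arcA s A -> arcR s A.
Proof.
move=> h ar.
case: (boolP [exists u : X, exists v : X, exists w : X, [&& u \in A, v \notin A, w \in A,
             pos s u < pos s v & pos s v < pos s w]]) => pat1; last first.
  have cvA : forall (u v w : X), u \in A -> v \notin A -> w \in A -> ~~ (pos s u < pos s v < pos s w).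
    move=> u v w uA vA wA; apply/negP => /andP [l1 l2]; move/negP: pat1; apply.
    by apply/existsP; exists u; apply/existsP; exists v; apply/existsP; exists w; rewrite uA vA wA l1 l2.
  have [lo [hi [hn r]]] := convex_rng h cvA.
  by exists lo, hi; split => //; left.
case: (boolP [exists u : X, exists v : X, exists w : X, [&& u \notin A, v \in A, w \notin A,
             pos s u < pos s v & pos s v < pos s w]]) => pat2; last first.
  have cvA : forall (u v w : X), u \in ~: A -> v \notin ~: A -> w \in ~: A -> ~~ (pos s u < pos s v < pos s w).
    move=> u v w; rewrite !inE negbK => uA vA wA; apply/negP => /andP [l1 l2]; move/negP: pat2; apply.
    by apply/existsP; exists u; apply/existsP; exists v; apply/existsP; exists w; rewrite uA vA wA l1 l2.
  have [lo [hi [hn r]]] := convex_rng h cvA.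
  by exists lo, hi; split => //; right.
exfalso.
move: pat1 => /existsP [u /existsP [v /existsP [w /and5P [uA vA wA l1 l2]]]].
move: pat2 => /existsP [u' /existsP [v' /existsP [w' /and5P [uA' vA' wA' l1' l2']]]].
case: (ltnP (pos s w) (pos s w')) => c1.
  have := ar _ _ _ _ uA vA wA wA'; rewrite /bet; lia.
case: (ltnP (pos s u') (pos s u)) => c2.
  have := ar _ _ _ _ uA vA wA uA'; rewrite /bet; lia.
have ne1 : pos s u != pos s u' by apply/eqP => /(pos_inj h) e; move: uA'; rewrite -e uA.
have ne2 : pos s w != pos s w' by apply/eqP => /(pos_inj h) e; move: wA'; rewrite -e wA.
have := ar _ _ _ _ uA uA' vA' wA'; rewrite /bet; lia.
Qed.

Lemma arcP s A : is_ordering s -> arcA s A <-> arcR s A.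
Proof. by move=> h; split; [exact: arcA_arcR | exact: arcR_arcA]. Qed.

Lemma arcR_compl s A : arcR s A -> arcR s (~: A).
Proof. by move=> [lo [hi [hn [r|r]]]]; exists lo, hi; split => //; [right; rewrite setCK | left]. Qed.

Lemma arcA_compl s A : is_ordering s -> arcA s A -> arcA s (~: A).
Proof. by move=> h /(arcP _ h) /arcR_compl /(arcP _ h). Qed.

Lemma pos_neq s x y : is_ordering s -> x != y -> pos s x != pos s y.
Proof. by move=> h; apply: contraNN => /eqP /(pos_inj h) ->. Qed.

Lemma neq_in x y A : x \in A -> y \notin A -> x != y.
Proof. by move=> xA; apply: contraNN => /eqP <-. Qed.

Lemma arcA_rot s k A : is_ordering s -> arcA s A -> arcA (rot k s) A.
Proof.
move=> h ar; case: (leqP k n) => hk; last first.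
  by rewrite rot_oversize // (ord_size h) ltnW.
move=> a b c d ha hb hc hd; rewrite !pos_rot //.
have nab := pos_neq h (neq_in ha hb); have nad := pos_neq h (neq_in ha hd).
have ncb := pos_neq h (neq_in hc hb); have ncd := pos_neq h (neq_in hc hd).
rewrite !bet_rot ?pos_lt ?(eq_sym (pos s d)) ?(eq_sym (pos s b)) //.
by rewrite (ar _ _ _ _ ha hb hc hd).
Qed.

Lemma arcA_rev s A : is_ordering s -> arcA s A -> arcA (rev s) A.
Proof.
move=> h ar a b c d ha hb hc hd; rewrite !pos_rev // !bet_rev; try by rewrite -ltnS prednK ?pos_lt // (leq_ltn_trans _ (pos_lt a h)).
exact: ar.
Qed.

Definition compatS I K : Prop :=
  [\/ (forall x, x \in K -> x \in I), (forall x, x \in I -> x \in K),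
      (forall x, x \in I -> x \notin K) | (forall x, x \notin I -> x \in K)].

Lemma arcA_tw w l K : is_ordering w -> l <= n -> arcA w K ->
  compatS [set x | pos w x < l] K -> arcA (tw w l) K.
Proof.
move=> h hl ar cp a b c d ha hb hc hd; rewrite !pos_tw //.
have nab := pos_neq h (neq_in ha hb); have nad := pos_neq h (neq_in ha hd).
have ncb := pos_neq h (neq_in hc hb); have ncd := pos_neq h (neq_in hc hd).
rewrite !bet_tw ?(eq_sym (pos w d)) ?(eq_sym (pos w b)) // (ar _ _ _ _ ha hb hc hd); congr addb.
case: cp => cp.
- by have := cp _ ha; have := cp _ hc; rewrite !inE => -> ->.
- have e1 := contra (cp b) hb; have e2 := contra (cp d) hd; move: e1 e2; rewrite !inE => /negbTE -> /negbTE ->.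
  by rewrite !andbF.
- have e1 : (pos w a < l) = false by apply/negbTE/negP => h1; move: (cp a); rewrite inE h1 ha => /(_ isT).
  have e2 : (pos w c < l) = false by apply/negbTE/negP => h1; move: (cp c); rewrite inE h1 hc => /(_ isT).
  by rewrite e1 e2.
- have e1 := contraR (cp b) hb; have e2 := contraR (cp d) hd; move: e1 e2; rewrite !inE => -> ->.
  by [].
Qed.

End Arcs.

Section Key.
Variable X : finType.
Local Notation n := #|X|.
Implicit Types (s u v w : seq X) (x y : X) (A B K I : {set X}).

Definition common u v K := arcR u K /\ arcR v K.
Definition cand u v R1 R2 := R1 != set0 /\ R2 != set0 /\ [disjoint R1 & R2] /\
   common u v R1 /\ common u v R2 /\ arcR v (R1 :|: R2) /\ ~ arcR u (R1 :|: R2).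

Lemma notcompat I K : ~ compatS I K -> exists x1 x2 x3 x4,
  [/\ x1 \in K /\ x1 \notin I, x2 \in I /\ x2 \notin K, x3 \in I /\ x3 \in K & x4 \notin I /\ x4 \notin K].
Proof.
move=> nc.
case: (classic (exists x1, x1 \in K /\ x1 \notin I)) => [[x1 h1]|h1]; last first.
  by exfalso; apply: nc; constructor 1 => x xK; apply/negPn/negP => xI; apply: h1; exists x.
case: (classic (exists x2, x2 \in I /\ x2 \notin K)) => [[x2 h2]|h2]; last first.
  by exfalso; apply: nc; constructor 2 => x xI; apply/negPn/negP => xK; apply: h2; exists x.
case: (classic (exists x3, x3 \in I /\ x3 \in K)) => [[x3 h3]|h3]; last first.
  by exfalso; apply: nc; constructor 3 => x xI; apply/negP => xK; apply: h3; exists x.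
case: (classic (exists x4, x4 \notin I /\ x4 \notin K)) => [[x4 h4]|h4]; last first.
  by exfalso; apply: nc; constructor 4 => x xI; apply/negPn/negP => xK; apply: h4; exists x.
by exists x1, x2, x3, x4.
Qed.

Lemma rngC s A lo hi : rng s (~: A) lo hi -> forall x, (x \in A) = ~~ (lo <= pos s x < hi).
Proof. by move=> r x; rewrite -r inE negbK. Qed.

Lemma cross1 u K a c : arcR u K -> ~ compatS [set x | a <= pos u x < c] K ->
  exists K0, (K0 = K \/ K0 = ~: K) /\ exists lo hi,
    (rng u K0 lo hi /\ a < lo < c /\ c < hi <= n) \/ (rng u (~: K0) lo hi /\ lo < a < hi /\ hi < c).
Proof.
move=> [lo [hi [hn [r|r]]]] /notcompat [x1 [x2 [x3 [x4 [[h1 h1'] [h2 h2'] [h3 h3'] [h4 h4']]]]]];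
  move: h1 h1' h2 h2' h3 h3' h4 h4'; rewrite !inE.
- rewrite !r => *.
  case: (ltnP a lo) => al.
    exists K; split; first by left. exists lo, hi; left; split => //; lia.
  exists (~: K); split; first by right. exists lo, hi; right; rewrite setCK; split => //; lia.
- rewrite !(rngC r) => *.
  case: (ltnP a lo) => al.
    exists (~: K); split; first by right. exists lo, hi; left; split => //; lia.
  exists K; split; first by left. exists lo, hi; right; split => //; lia.
Qed.

Lemma cross2 u K b : is_ordering u -> arcR u K -> ~ compatS [set x | pos u x < b] K ->
  exists K0, (K0 = K \/ K0 = ~: K) /\ exists lo hi,
    rng u K0 lo hi /\ 0 < lo < b /\ b < hi < n.
Proof.
move=> hu [lo [hi [hn [r|r]]]] /notcompat [x1 [x2 [x3 [x4 [[h1 h1'] [h2 h2'] [h3 h3'] [h4 h4']]]]]];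
  have := pos_lt x4 hu; have := pos_lt x1 hu; move: h1 h1' h2 h2' h3 h3' h4 h4'; rewrite !inE.
- rewrite !r => *.
  exists K; split; first by left. exists lo, hi; split => //; lia.
- rewrite !(rngC r) => *.
  exists (~: K); split; first by right. exists lo, hi; split => //; lia.
Qed.


Lemma sigma_step v K R1 R2 a' j y1 y2 z1 z2 :
  arcR v K -> rng v R1 0 a' -> rng v R2 a' j ->
  y1 \in K -> y1 \in R2 -> y2 \in K -> y2 \notin R1 -> y2 \notin R2 ->
  z1 \notin K -> z1 \in R1 -> z2 \notin K -> z2 \notin R1 -> z2 \notin R2 ->
  exists lo' hi', [/\ rng v K lo' hi', hi' <= n, lo' < j & j < hi'].
Proof.
move=> [lo [hi [hn [r|r]]]] r1 r2.
- rewrite !r !r1 !r2 => *; exists lo, hi; split => //; lia.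
- rewrite !(rngC r) !r1 !r2 => *; lia.
Qed.

Lemma cand_big u v R1 R2 a b c a' j K lo hi lo' hi' y :
  is_ordering u -> is_ordering v -> 0 < a -> a < b -> b < c -> c < n -> a' < j ->
  rng u R1 0 a -> rng u R2 b c -> rng v R1 0 a' -> rng v R2 a' j ->
  rng u K lo hi -> a < lo -> lo < c -> b < hi -> hi < n ->
  rng v K lo' hi' -> hi' <= n -> lo' < j -> j < hi' ->
  y \in K -> y \notin R1 -> y \notin R2 ->
  cand u v R1 (R2 :|: K) /\ #|R1 :|: R2| < #|R1 :|: (R2 :|: K)|.
Proof.
move=> hu hv a0 ab bc cn a'j r1 r2 r1' r2' rk alo loc bhi hin rk' hi'n lo'j jhi' yK yR1 yR2.
have la' : a' <= lo'.
  case: (leqP a' lo') => // lt.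
  have [g pg] := pos_surj hv (i := lo') ltac:(lia).
  have gK : g \in K by rewrite rk' pg; lia.
  have gR1 : g \in R1 by rewrite r1' pg; lia.
  move: gK gR1; rewrite rk r1; lia.
have [e0 p0] := pos_surj hu (i := 0) ltac:(lia).
have [ea pa] := pos_surj hu (i := a) ltac:(lia).
have [em pm] := pos_surj hu (i := minn b lo) ltac:(lia).
have [el pl] := pos_surj hu (i := n.-1) ltac:(lia).
have ru : rng u (R2 :|: K) (minn b lo) (maxn c hi).
  by move=> x; rewrite inE r2 rk; apply/idP/idP; lia.
have rv : rng v (R2 :|: K) a' hi'.
  by move=> x; rewrite inE r2' rk'; apply/idP/idP; lia.
have rv2 : rng v (R1 :|: (R2 :|: K)) 0 hi'.
  by move=> x; rewrite inE rv r1'; apply/idP/idP; lia.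
split; last first.
  apply: proper_card; apply/properP; split.
    by apply/subsetP => x; rewrite !inE; case/orP => ->; rewrite ?orbT.
  by exists y; rewrite !inE ?yK ?orbT //; apply/norP; split.
split; first by apply/set0Pn; exists e0; rewrite r1 p0.
split; first by apply/set0Pn; exists y; rewrite inE yK orbT.
split; first by rewrite disjoints_subset; apply/subsetP => x; rewrite in_setC r1 ru; lia.
split; first by split; [exists 0, a | exists 0, a']; split; try lia; left.
split; first by split; [exists (minn b lo), (maxn c hi) | exists a', hi']; split; try lia; left.
split; first by exists 0, hi'; split => //; left.
move=> /arcR_arcA ar.
have i0 : e0 \in R1 :|: (R2 :|: K) by rewrite inE r1 p0; lia.
have ia : ea \notin R1 :|: (R2 :|: K) by rewrite inE r1 ru pa; lia.
have im : em \in R1 :|: (R2 :|: K) by rewrite inE ru pm; lia.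
have il : el \notin R1 :|: (R2 :|: K) by rewrite inE r1 ru pl; lia.
have := ar _ _ _ _ i0 ia im il; rewrite p0 pa pm pl /bet; lia.
Qed.


Ltac cln := repeat match goal with
 | H : is_true (_ \in _) |- _ => clear H
 | H : is_true (~~ (_ \in _)) |- _ => clear H
 | H : is_true (_ \notin _) |- _ => clear H
 end.

Lemma key u v R1 R2 a b c a' j :
  is_ordering u -> is_ordering v -> 0 < a -> a < b -> b < c -> c < n ->
  0 < a' -> a' < j -> j < n ->
  rng u R1 0 a -> rng u R2 b c -> rng v R1 0 a' -> rng v R2 a' j ->
  (forall R1' R2', cand u v R1' R2' -> #|R1' :|: R2'| <= #|R1 :|: R2|) ->
  (forall K, common u v K -> compatS [set x | a <= pos u x < c] K) \/
  (forall K, common u v K -> compatS [set x | pos u x < b] K).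
Proof.
move=> hu hv a0 ab bc cn a'0 a'j jn r1 r2 r1' r2' Hmax.
case: (classic (forall K, common u v K -> compatS [set x | a <= pos u x < c] K)) => H1; first by left.
right => K2 cK2; apply: NNPP => nc2.
have [K1 [cK1 nc1]] : exists K1, common u v K1 /\ ~ compatS [set x | a <= pos u x < c] K1.
  apply: NNPP => hh; apply: H1 => K cK; apply: NNPP => nc; by apply: hh; exists K; split.
have [e0 p0] := pos_surj hu (i := 0) ltac:(cln; lia).
have [ea1 pa1] := pos_surj hu (i := a.-1) ltac:(cln; lia).
have [ea pa] := pos_surj hu (i := a) ltac:(cln; lia).
have [eb1 pb1] := pos_surj hu (i := b.-1) ltac:(cln; lia).
have [eb pb] := pos_surj hu (i := b) ltac:(cln; lia).
have [ec1 pc1] := pos_surj hu (i := c.-1) ltac:(cln; lia).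
have [ec pc] := pos_surj hu (i := c) ltac:(cln; lia).
have [el pl] := pos_surj hu (i := n.-1) ltac:(cln; lia).
have e0R1 : e0 \in R1 by rewrite r1 p0; cln; lia.
have ea1R1 : ea1 \in R1 by rewrite r1 pa1; cln; lia.
have eaR1 : ea \notin R1 by rewrite r1 pa; cln; lia.
have eaR2 : ea \notin R2 by rewrite r2 pa; cln; lia.
have eb1R1 : eb1 \notin R1 by rewrite r1 pb1; cln; lia.
have eb1R2 : eb1 \notin R2 by rewrite r2 pb1; cln; lia.
have ebR2 : eb \in R2 by rewrite r2 pb; cln; lia.
have ec1R2 : ec1 \in R2 by rewrite r2 pc1; cln; lia.
have ecR1 : ec \notin R1 by rewrite r1 pc; cln; lia.
have ecR2 : ec \notin R2 by rewrite r2 pc; cln; lia.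
have elR1 : el \notin R1 by rewrite r1 pl; cln; lia.
have elR2 : el \notin R2 by rewrite r2 pl; cln; lia.
have cmp : forall (Z0 Z : {set X}), (Z0 = Z \/ Z0 = ~: Z) -> common u v Z -> common u v Z0.
  by move=> Z0 Z [->|->] // [h1 h2]; split; apply: arcR_compl.
have [Ka [[lo1 [hi1 [rKa hi1n lo1j jhi1]]] [NK eaK]]] : exists Ka, (exists lo' hi', [/\ rng v Ka lo' hi', hi' <= n, lo' < j & j < hi'])
   /\ (forall x, c <= pos u x -> x \in Ka) /\ ea \notin Ka.
  have [K0 [eK0 [lo [hi [[rK [lh1 lh2]]|[rK [lh1 lh2]]]]]]] := cross1 (proj1 cK1) nc1;
    have cK0 := cmp _ _ eK0 cK1.
  - have ec1K : ec1 \in K0 by rewrite rK pc1; cln; lia.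
    have ecK : ec \in K0 by rewrite rK pc; cln; lia.
    have ea1K : ea1 \notin K0 by rewrite rK pa1; cln; lia.
    have eaK : ea \notin K0 by rewrite rK pa; cln; lia.
    have [lo' [hi' [rv hn' lj jh]]] := sigma_step (proj2 cK0) r1' r2' ec1K ec1R2 ecK ecR1 ecR2 ea1K ea1R1 eaK eaR1 eaR2.
    case: (ltnP hi n) => hin.
      have [cd lt] := cand_big hu hv a0 ab bc cn a'j r1 r2 r1' r2' rK ltac:(cln; lia) ltac:(cln; lia) ltac:(cln; lia) hin rv hn' lj jh ecK ecR1 ecR2.
      by have := Hmax _ _ cd; cln; lia.
    exists K0; split; first by exists lo', hi'.
    split => // x cx; rewrite rK; have := pos_lt x hu; cln; lia.
  - have ec1K : ec1 \in K0 by rewrite (rngC rK) pc1; cln; lia.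
    have ecK : ec \in K0 by rewrite (rngC rK) pc; cln; lia.
    have ea1K : ea1 \notin K0 by rewrite (rngC rK) pa1; cln; lia.
    have eaK : ea \notin K0 by rewrite (rngC rK) pa; cln; lia.
    have [lo' [hi' [rv hn' lj jh]]] := sigma_step (proj2 cK0) r1' r2' ec1K ec1R2 ecK ecR1 ecR2 ea1K ea1R1 eaK eaR1 eaR2.
    exists K0; split; first by exists lo', hi'.
    split => // x cx; rewrite (rngC rK); cln; lia.
have [Kb [[lo2 [hi2 [rKb hi2n lo2j jhi2]]] [MK elK]]] : exists Kb, (exists lo' hi', [/\ rng v Kb lo' hi', hi' <= n, lo' < j & j < hi'])
   /\ (forall x, a <= pos u x < b -> x \in Kb) /\ el \notin Kb.
  have [K0 [eK0 [lo [hi [rK [lh1 lh2]]]]]] := cross2 hu (proj1 cK2) nc2.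
  have cK0 := cmp _ _ eK0 cK2.
  have ebK : eb \in K0 by rewrite rK pb; cln; lia.
  have eb1K : eb1 \in K0 by rewrite rK pb1; cln; lia.
  have e0K : e0 \notin K0 by rewrite rK p0; cln; lia.
  have elK : el \notin K0 by rewrite rK pl; cln; lia.
  have [lo' [hi' [rv hn' lj jh]]] := sigma_step (proj2 cK0) r1' r2' ebK ebR2 eb1K eb1R1 eb1R2 e0K e0R1 elK elR1 elR2.
  case: (leqP lo a) => la.
    exists K0; split; first by exists lo', hi'.
    by split => // x cx; rewrite rK; cln; lia.
  have [cd lt] := cand_big (hi := hi) hu hv a0 ab bc cn a'j r1 r2 r1' r2' rK la ltac:(cln; lia) ltac:(cln; lia) ltac:(cln; lia) rv hn' lj jh eb1K eb1R1 eb1R2.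
  by have := Hmax _ _ cd; cln; lia.
have eaKb : ea \in Kb by apply: MK; cln; lia.
have elKa : el \in Ka by apply: NK; cln; lia.
move: eaR1 eaR2 elR1 elR2 eaK elK eaKb elKa; rewrite !r1' !r2' !rKa !rKb.
move: (pos v ea) (pos v el) => x y.
clear - lo1j jhi1 lo2j jhi2 a'j; cln; lia.
Qed.

End Key.

Section Glue.
Variable X : finType.
Local Notation n := #|X|.
Implicit Types (s t u v w : seq X) (x y : X) (A B K I : {set X}).

Lemma arcA_rotE s k A : is_ordering s -> arcA (rot k s) A <-> arcA s A.
Proof.
move=> h; split; last exact: arcA_rot.
move=> ar; rewrite -(rotK k s) /rotr; apply: arcA_rot => //; exact: ord_rot.
Qed.

Lemma arcA_revE s A : is_ordering s -> arcA (rev s) A <-> arcA s A.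
Proof.
move=> h; split; last exact: arcA_rev.
move=> ar; rewrite -(revK s); apply: arcA_rev => //; exact: ord_rev.
Qed.

Lemma circ_ord s t : is_ordering s -> circ_equiv s t -> is_ordering t.
Proof. by move=> h [k [->|->]]; [apply: ord_rot | apply: ord_rot; apply: ord_rev]. Qed.

Lemma circ_arc s t A : is_ordering s -> circ_equiv s t -> arcA s A -> arcA t A.
Proof.
move=> h [k [->|->]] ar; first exact: arcA_rot.
apply: arcA_rot; first exact: ord_rev. exact: arcA_rev.
Qed.

Lemma interval_arc s k l : is_ordering s -> arcA s (interval s k l).
Proof.
move=> h; rewrite -{1}(rotK k s) /rotr; apply: arcA_rot; first exact: ord_rot.
apply: arcR_arcA.
exists 0, (minn l n); split; first by rewrite geq_minr.
left => x; rewrite mem_interval //; have := pos_lt x (ord_rot k h); lia.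
Qed.

Lemma arc_interval s A : is_ordering s -> arcA s A -> A != set0 -> A != setT ->
  exists k l, [/\ 0 < l, l < n & A = interval s k l].
Proof.
move=> h /(arcP _ h) [lo [hi [hn [r|r]]]] /set0Pn [x xA] nT.
- have [y yA] : exists y, y \notin A.
    apply: NNPP => hh; move/eqP: nT; apply; apply/setP => z; rewrite inE.
    by apply: NNPP => hz; apply: hh; exists z; exact/negP.
  move: xA yA; rewrite !r => xA yA.
  have py := pos_lt y h.
  exists lo, (hi - lo); split; try lia.
  apply/setP => z; rewrite mem_interval // r pos_rot //; last by lia.
  case: (ltnP (pos s z) lo) => *; have pz := pos_lt z h; apply/idP/idP; lia.
- have [y yA] : exists y, y \notin A.
    apply: NNPP => hh; move/eqP: nT; apply; apply/setP => z; rewrite inE.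
    by apply: NNPP => hz; apply: hh; exists z; exact/negP.
  move: xA yA; rewrite !(rngC r) => xA yA.
  have py := pos_lt y h; have px := pos_lt x h.
  exists hi, (n - hi + lo); split; try lia.
  apply/setP => z; rewrite mem_interval // (rngC r) pos_rot //.
  case: (ltnP (pos s z) hi) => *; have pz := pos_lt z h; apply/idP/idP; lia.
Qed.

Lemma arc_prefix s A : is_ordering s -> arcA s A -> A != set0 ->
  exists k m, [/\ k <= n, 0 < m, m <= n & rng (rot k s) A 0 m].
Proof.
move=> h /(arcP _ h) [lo [hi [hn [r|r]]]] /set0Pn [x xA].
- move: xA; rewrite r => xA.
  exists lo, (hi - lo); split; try lia.
  move=> z; rewrite r pos_rot //; last by lia.
  case: (ltnP (pos s z) lo) => *; have pz := pos_lt z h; apply/idP/idP; lia.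
- move: xA; rewrite (rngC r) => xA.
  have := pos_lt x h => xn.
  case: (leqP hi lo) => hl.
    exists 0, n; split; try lia.
    by move=> z; rewrite (rngC r) rot0; have pz := pos_lt z h; apply/idP/idP; lia.
  exists hi, (n - hi + lo); split; try lia.
  move=> z; rewrite (rngC r) pos_rot //.
  case: (ltnP (pos s z) hi) => *; have pz := pos_lt z h; apply/idP/idP; lia.
Qed.

End Glue.

Section Step.
Variable X : finType.
Local Notation n := #|X|.
Implicit Types (s t u v w : seq X) (x y : X) (A B K I J : {set X}).

Definition candA s t R1 R2 := R1 != set0 /\ R2 != set0 /\ [disjoint R1 & R2] /\
   (arcA s R1 /\ arcA t R1) /\ (arcA s R2 /\ arcA t R2) /\ arcA t (R1 :|: R2) /\ ~ arcA s (R1 :|: R2).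

Lemma circ_arcE s t A : is_ordering s -> circ_equiv s t -> (arcA s A <-> arcA t A).
Proof.
move=> h ce; split; first exact: circ_arc.
case: ce => k [->|->] ar.
  by rewrite -(rotK k s) /rotr; apply: arcA_rot => //; exact: ord_rot.
rewrite -(revK s); apply: arcA_rev; first exact: ord_rev.
by rewrite -(rotK k (rev s)) /rotr; apply: arcA_rot => //; apply: ord_rot; exact: ord_rev.
Qed.

Lemma circ_rot s k : circ_equiv s (rot k s).
Proof. by exists k; left. Qed.

Lemma candA_sym s t R1 R2 : candA s t R1 R2 -> candA s t R2 R1.
Proof.
move=> [h1 [h2 [h3 [h4 [h5 [h6 h7]]]]]]; rewrite /candA setUC disjoint_sym.
by do !split => //; try apply: h4; try apply: h5.
Qed.

Lemma cand_candA s t u v R1 R2 : is_ordering s -> is_ordering t ->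
  circ_equiv s u -> circ_equiv t v -> cand u v R1 R2 -> candA s t R1 R2.
Proof.
move=> hs ht cu cv; have hu := circ_ord hs cu; have hv := circ_ord ht cv.
have Es : forall A, arcA s A <-> arcR u A.
  by move=> A; rewrite -arcP //; apply: circ_arcE.
have Et : forall A, arcA t A <-> arcR v A.
  by move=> A; rewrite -arcP //; apply: circ_arcE.
move=> [h1 [h2 [h3 [[h4 h4'] [[h5 h5'] [h6 h7]]]]]].
do !split => //; try (by apply/Es); try (by apply/Et).
Qed.

Lemma arcA_setT s : arcA s [set: X].
Proof. by move=> a b c d _; rewrite inE. Qed.

Lemma split_prefix v J R1 R2 j : is_ordering v -> rng v J 0 j -> j < n ->
  J = R1 :|: R2 -> [disjoint R1 & R2] -> R1 != set0 -> R2 != set0 ->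
  arcR v R1 -> arcA v R2 ->
  exists a', 0 < a' < j /\ ((rng v R1 0 a' /\ rng v R2 a' j) \/ (rng v R2 0 a' /\ rng v R1 a' j)).
Proof.
move=> hv rJ jn eJ dis /set0Pn [x1 x1R] /set0Pn [x2 x2R] ar1 ar2.
have mR2 : forall x, (x \in R2) = (x \in J) && (x \notin R1).
  move=> x; rewrite eJ inE; case: (boolP (x \in R1)) => xR1 /=; last by rewrite andbT.
  by rewrite (disjointFr dis xR1).
have [lo [hi [hn r]]] : exists lo hi, hi <= n /\ rng v R1 lo hi.
  case: ar1 => lo [hi [hn [r|r]]]; first by exists lo, hi.
  case: (ltnP hi n) => hin.
    have [e pe] := pos_surj hv (i := n.-1) ltac:(lia).
    have : e \in R1 by rewrite (rngC r) pe; lia.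
    move=> eR1; have : e \in J by rewrite eJ inE eR1.
    by rewrite rJ pe; lia.
  exists 0, (minn lo n); split; first by lia.
  by move=> x; rewrite (rngC r); have px := pos_lt x hv; apply/idP/idP; lia.
have mR2' : forall x, (x \in R2) = (pos v x < j) && ~~ (lo <= pos v x < hi).
  by move=> x; rewrite mR2 rJ r.
move: x1R x2R; rewrite r mR2' => x1R x2R.
have hij : hi <= j.
  have [e pe] := pos_surj hv (i := hi.-1) ltac:(lia).
  have : e \in R1 by rewrite r pe; lia.
  move=> eR1; have : e \in J by rewrite eJ inE eR1.
  by rewrite rJ pe; lia.
case: (posnP lo) => l0.
  exists hi; split; first by lia.
  left; split; first by move=> x; rewrite r l0.
  by move=> x; rewrite mR2'; apply/idP/idP; lia.
case: (ltnP hi j) => hj; last first.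
  exists lo; split; first by lia.
  right; split; first by move=> x; rewrite mR2'; apply/idP/idP; lia.
  by move=> x; rewrite r; apply/idP/idP; lia.
exfalso.
have [e0 p0] := pos_surj hv (i := 0) ltac:(lia).
have [el pl] := pos_surj hv (i := lo) ltac:(lia).
have [eh ph] := pos_surj hv (i := hi) ltac:(lia).
have [ej pj] := pos_surj hv (i := j) ltac:(lia).
have i0 : e0 \in R2 by rewrite mR2' p0; lia.
have il : el \notin R2 by rewrite mR2' pl; lia.
have ih : eh \in R2 by rewrite mR2' ph; lia.
have ij : ej \notin R2 by rewrite mR2' pj; lia.
have := ar2 _ _ _ _ i0 il ih ij; rewrite p0 pl ph pj /bet; lia.
Qed.

Lemma second_range u A1 A2 a : is_ordering u -> 0 < a -> rng u A1 0 a -> arcR u A2 ->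
  A2 != set0 -> [disjoint A1 & A2] -> ~ arcR u (A1 :|: A2) ->
  exists b c, a < b < c /\ c < n /\ rng u A2 b c.
Proof.
move=> hu a0 r1 ar2 /set0Pn [x2 x2R] dis nar.
have [e0 p0] := pos_surj hu (i := 0) ltac:(have := pos_lt x2 hu; lia).
have e0A1 : e0 \in A1 by rewrite r1 p0.
have e0A2 : e0 \notin A2 by rewrite (disjointFr dis e0A1).
have [lo [hi [hn r]]] : exists lo hi, hi <= n /\ rng u A2 lo hi.
  case: ar2 => lo [hi [hn [r|r]]]; first by exists lo, hi.
  exists hi, n; split => //.
  move: e0A2; rewrite (rngC r) p0 => e0A2.
  by move=> x; rewrite (rngC r); have px := pos_lt x hu; apply/idP/idP; lia.
move: x2R; rewrite r => x2R.
have [el pl] := pos_surj hu (i := lo) ltac:(lia).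
have loa : a <= lo.
  have : el \in A2 by rewrite r pl; lia.
  move=> elA2; have : el \notin A1 by rewrite (disjointFl dis elA2).
  by rewrite r1 pl; lia.
case: (ltnP a lo) => alo; last first.
  exfalso; apply: nar; exists 0, hi; split => //; left.
  by move=> x; rewrite inE r1 r; apply/idP/idP; lia.
case: (ltnP hi n) => hin; last first.
  exfalso; apply: nar; exists a, lo; split; first by lia. right.
  by move=> x; rewrite !inE r1 r; have px := pos_lt x hu; apply/idP/idP; lia.
by exists lo, hi; split; [lia | split].
Qed.

End Step.

Section Step2.
Variable X : finType.
Local Notation n := #|X|.
Implicit Types (s t u v w : seq X) (x y : X) (A B K I J : {set X}).

Lemma step1 s t v R1 R2 a' j : is_ordering s -> is_ordering t -> circ_equiv t v ->
  0 < a' -> a' < j -> j < n -> rng v R1 0 a' -> rng v R2 a' j ->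
  candA s t R1 R2 ->
  (forall R1' R2', candA s t R1' R2' -> #|R1' :|: R2'| <= #|R1 :|: R2|) ->
  exists k l, [/\ 2 <= l, l <= n - 2, (forall K, arcA s K -> arcA t K -> compatS (interval s k l) K)
     & arcA (twist s k l) (R1 :|: R2)].
Proof.
move=> hs ht cv a'0 a'j jn r1' r2' cd Hmax.
have hv := circ_ord ht cv.
have [h1 [h2 [h3 [[h4 h4'] [[h5 h5'] [h6 h7]]]]]] := cd.
have [k1 [a [k1n a0 an r1]]] := arc_prefix hs h4 h1.
have hu : is_ordering (rot k1 s) by apply: ord_rot.
have cu : circ_equiv s (rot k1 s) by apply: circ_rot.
have Erot := rot_rot_add k1 ^~ s.
have [u eu] : exists u, rot k1 s = u by exists (rot k1 s).
rewrite eu in hu cu r1 Erot.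
have ar2 : arcR u R2 by apply/arcP => //; apply: circ_arc h5.
have nar : ~ arcR u (R1 :|: R2).
  by move=> /arcR_arcA hh; apply: h7; apply/(circ_arcE _ hs cu).
have [b [c [abc [cn r2]]]] := second_range hu a0 r1 ar2 h2 h3 nar.
have Hmax' : forall R1' R2', cand u v R1' R2' -> #|R1' :|: R2'| <= #|R1 :|: R2|.
  by move=> R1' R2' cd'; apply: Hmax; apply: (cand_candA hs ht cu cv).
have comm : forall K, arcA s K -> arcA t K -> common u v K.
  by move=> K aK aK'; split; apply/arcP => //; [apply: circ_arc aK | apply: circ_arc aK'].
have [ab bc] : a < b /\ b < c by lia.
case: (key hu hv a0 ab bc cn a'0 a'j jn r1 r2 r1' r2' Hmax') => H.
- have hw : is_ordering (rot a u) by apply: ord_rot.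
  have := Erot a; move: (rot_add s k1 a) => k e; symmetry in e.
  have eI : interval s k (c - a) = [set x | a <= pos u x < c].
    have pr : a <= n by lia.
    apply/setP => x; rewrite mem_interval // e inE pos_rot //.
    have px := pos_lt x hu; case: (ltnP (pos u x) a) => c1; apply/idP/idP; lia.
  exists k, (c - a); split; try lia.
    by move=> K aK aK'; rewrite eI; apply: H; apply: comm.
  rewrite tw_def e; apply: arcR_arcA; exists (c - b), (n - a); split; first by lia.
  have pr : a <= n by lia. have pr2 : c - a <= n by lia.
  right => x; rewrite !inE r1 r2 pos_tw // pos_rot //.
  have px := pos_lt x hu; case: (ltnP (pos u x) a) => c1; case: ifP => c2; apply/idP/idP; lia.
- exists k1, b; split; try lia.
    move=> K aK aK'; have -> : interval s k1 b = [set x | pos u x < b].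
      by apply/setP => x; rewrite mem_interval // inE eu.
    by apply: H; apply: comm.
  rewrite tw_def eu; apply: arcR_arcA; exists (b - a), c; split; first by lia.
  have pr2 : b <= n by lia.
  left => x; rewrite !inE r1 r2 pos_tw //.
  have px := pos_lt x hu; case: (ltnP (pos u x) b) => c1; apply/idP/idP; lia.
Qed.

Lemma step s t R1 R2 : is_ordering s -> is_ordering t -> candA s t R1 R2 ->
  (forall R1' R2', candA s t R1' R2' -> #|R1' :|: R2'| <= #|R1 :|: R2|) ->
  exists k l, [/\ 2 <= l, l <= n - 2, (forall K, arcA s K -> arcA t K -> compatS (interval s k l) K)
     & arcA (twist s k l) (R1 :|: R2)].
Proof.
move=> hs ht cd Hmax.
have [h1 [h2 [h3 [[h4 h4'] [[h5 h5'] [h6 h7]]]]]] := cd.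
have J0 : R1 :|: R2 != set0.
  by move: h1 => /set0Pn [x xR]; apply/set0Pn; exists x; rewrite inE xR.
have [k0 [j [k0n j0 jn' rJ]]] := arc_prefix ht h6 J0.
have hv : is_ordering (rot k0 t) by apply: ord_rot.
have cv : circ_equiv t (rot k0 t) by apply: circ_rot.
have [v ev] : exists v, rot k0 t = v by exists (rot k0 t).
rewrite ev in hv cv rJ.
have jn : j < n.
  case: (ltnP j n) => // jn; exfalso; apply: h7.
  have -> : R1 :|: R2 = [set: X].
    by apply/setP => x; rewrite in_setT rJ; have := pos_lt x hv; lia.
  exact: arcA_setT.
have ar1 : arcR v R1 by apply/arcP => //; apply: circ_arc h4'.
have ar2 : arcA v R2 by apply: circ_arc h5'.
have [a' [aj [[r1 r2]|[r2 r1]]]] := split_prefix hv rJ jn (erefl _) h3 h1 h2 ar1 ar2.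
  by apply: (step1 hs ht cv (a' := a') (j := j)) => //; lia.
rewrite setUC; apply: (step1 hs ht cv (a' := a') (j := j) (R1 := R2) (R2 := R1)) => //; try lia.
  exact: candA_sym.
by move=> R1' R2' cd'; rewrite [R2 :|: R1]setUC; apply: Hmax.
Qed.

End Step2.

Section Adj.
Variable X : finType.
Local Notation n := #|X|.
Implicit Types (s t u v w T : seq X) (x y z : X) (A B K I J : {set X}).

Lemma pair_pos w x y : is_ordering w -> x != y -> arcA w [set x; y] ->
  [\/ pos w y = (pos w x).+1, pos w x = (pos w y).+1,
      pos w x = 0 /\ pos w y = n.-1 | pos w y = 0 /\ pos w x = n.-1].
Proof.
move=> hw.
wlog: x y / pos w x < pos w y.
  move=> W nxy ar; case: (ltngtP (pos w x) (pos w y)) => c.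
  - exact: W.
  - have : [set y; x] = [set x; y] by rewrite setUC.
    move=> e; rewrite -e in ar.
    by case: (W y x c _ ar); rewrite 1?eq_sym // => *; [constructor 2|constructor 1|constructor 4|constructor 3].
  - by move: nxy; rewrite (pos_inj hw c) eqxx.
move=> lt nxy ar.
have px := pos_lt x hw; have py := pos_lt y hw.
case: (ltnP (pos w y) (pos w x).+2) => c1.
  by constructor 1; lia.
case: (posnP (pos w x)) => c2.
  case: (ltnP (pos w y) n.-1) => c3; last by constructor 3; lia.
  exfalso.
  have [m pm] := pos_surj hw (i := (pos w x).+1) ltac:(lia).
  have [o po] := pos_surj hw (i := n.-1) ltac:(lia).
  have xi : x \in [set x; y] by rewrite !inE eqxx.
  have yi : y \in [set x; y] by rewrite !inE eqxx orbT.
  have mi : m \notin [set x; y].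
    by rewrite !inE; apply/norP; split; apply/negP => /eqP e; move: pm; rewrite e; lia.
  have oi : o \notin [set x; y].
    by rewrite !inE; apply/norP; split; apply/negP => /eqP e; move: po; rewrite e; lia.
  by have := ar _ _ _ _ xi mi yi oi; rewrite pm po /bet; lia.
exfalso.
have [m pm] := pos_surj hw (i := (pos w x).+1) ltac:(lia).
have [o po] := pos_surj hw (i := 0) ltac:(lia).
have xi : x \in [set x; y] by rewrite !inE eqxx.
have yi : y \in [set x; y] by rewrite !inE eqxx orbT.
have mi : m \notin [set x; y].
  by rewrite !inE; apply/norP; split; apply/negP => /eqP e; move: pm; rewrite e; lia.
have oi : o \notin [set x; y].
  by rewrite !inE; apply/norP; split; apply/negP => /eqP e; move: po; rewrite e; lia.
by have := ar _ _ _ _ xi mi yi oi; rewrite pm po /bet; lia.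
Qed.

Lemma pair_rng T x y i : is_ordering T -> pos T x = i -> pos T y = i.+1 ->
  rng T [set x; y] i i.+2.
Proof.
move=> hT px py z; rewrite !inE.
apply/idP/idP.
  by case/orP => /eqP ->; lia.
move=> hz; case: (ltnP (pos T z) i.+1) => c.
  by apply/orP; left; apply/eqP; apply: (pos_inj hT); lia.
by apply/orP; right; apply/eqP; apply: (pos_inj hT); lia.
Qed.

Lemma same_pos u T : is_ordering u -> is_ordering T -> 2 < n ->
  (forall x y, x != y -> arcA T [set x; y] -> arcA u [set x; y]) ->
  forall x0 z1, pos u x0 = 0 -> pos T x0 = 0 -> pos u z1 = 1 -> pos T z1 = 1 ->
  u = T.
Proof.
move=> hu hT n3 H x0 z1 u0 T0 u1 T1.
have key : forall i, 0 < i -> i < n -> forall z, pos T z <= i -> pos u z = pos T z.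
  elim=> [//|i IH] _ hi z hz.
  case: (posnP i) => i0.
    case: (posnP (pos T z)) => c.
      by rewrite (pos_inj hT (etrans c (esym T0))) u0 T0.
    by rewrite (pos_inj hT (_ : pos T z = pos T z1)) ?u1 ?T1 //; lia.
  have IH' := IH ltac:(lia) ltac:(lia).
  case: (ltnP (pos T z) i.+1) => c; first by apply: IH'; lia.
  have ez : pos T z = i.+1 by lia.
  have [y py] := pos_surj hT (i := i) ltac:(lia).
  have [w pw] := pos_surj hT (i := i.-1) ltac:(lia).
  have uy : pos u y = i by rewrite IH' py.
  have uw : pos u w = i.-1 by rewrite IH' pw //; lia.
  have nyz : y != z by apply/eqP => e; move: py; rewrite e; lia.
  have ar : arcA u [set y; z].
    apply: H => //; apply: arcR_arcA; exists i, i.+2; split; first by lia.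
    by left; apply: pair_rng.
  case: (pair_pos hu nyz ar); rewrite uy ez => c2; try lia.
  have e : w = z by apply: (pos_inj hu); lia.
  by move: pw; rewrite e ez; lia.
have e : forall z, pos u z = pos T z.
  move=> z; apply: (key n.-1); try lia; have := pos_lt z hT; lia.
have su := ord_size hu; have sT := ord_size hT.
apply: (eq_from_nth (x0 := x0)); first by rewrite su sT.
move=> i hi; rewrite su in hi.
have [z pz] := pos_surj hT (i := i) hi.
rewrite -pz -{1}(e z) /pos !nth_index //; exact: ord_mem.
Qed.


Lemma adj_equiv s t : is_ordering s -> is_ordering t -> 2 < n ->
  (forall x y, x != y -> arcA t [set x; y] -> arcA s [set x; y]) -> circ_equiv s t.
Proof.
move=> hs ht n3 H.
have [x0 p0] := pos_surj ht (i := 0) ltac:(lia).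
have [y1 p1] := pos_surj ht (i := 1) ltac:(lia).
have [yl pl] := pos_surj ht (i := n.-1) ltac:(lia).
have hu : is_ordering (rot (pos s x0) s) by apply: ord_rot.
have cu : circ_equiv s (rot (pos s x0) s) by apply: circ_rot.
have u0 : pos (rot (pos s x0) s) x0 = 0.
  by rewrite pos_rot // ?ltnn ?subnn //; apply: ltnW; apply: pos_lt.
have [u eu] : exists u, rot (pos s x0) s = u by exists (rot (pos s x0) s).
rewrite eu in hu cu u0.
have Hu : forall x y, x != y -> arcA t [set x; y] -> arcA u [set x; y].
  by move=> x y nxy /(H _ _ nxy) ar; apply: circ_arc ar.
have n01 : x0 != y1 by apply/eqP => e; move: p1; rewrite -e p0.
have a01 : arcA u [set x0; y1].
  apply: Hu => //; apply: arcR_arcA; exists 0, 2; split; first by lia.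
  by left; apply: pair_rng.
case: (pair_pos hu n01 a01); rewrite u0.
- move=> u1; have := same_pos hu ht n3 Hu u0 p0 u1 p1.
  by move=> e; exists (pos s x0); left; rewrite eu e.
- by [].
- move=> [_ u1].
  set T := rot n.-1 (rev t).
  have hT : is_ordering T by apply: ord_rot; apply: ord_rev.
  have cT : circ_equiv t T by exists n.-1; right.
  have posT : forall x, pos T x = if 0 < pos t x then n - pos t x else 0.
    move=> x; rewrite /T pos_rot; [| exact: ord_rev | lia].
    rewrite pos_rev //.
    have px := pos_lt x ht; case: ifP => c1; case: ifP => c2; lia.
  have T0 : pos T x0 = 0 by rewrite posT p0.
  have T1 : pos T yl = 1 by rewrite posT pl; case: ifP; lia.
  have HT : forall x y, x != y -> arcA T [set x; y] -> arcA u [set x; y].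
    by move=> x y nxy ar; apply: Hu => //; apply/(circ_arcE _ ht cT).
  have n0l : x0 != yl by apply/eqP => e; move: pl; rewrite -e p0; lia.
  have a0l : arcA u [set x0; yl].
    apply: Hu => //; apply: arcR_arcA; exists 1, n.-1; split; first by lia.
    right => x; rewrite !inE.
    case: (eqVneq x x0) => [->|nx0]; first by rewrite p0.
    case: (eqVneq x yl) => [->|nxl]; first by rewrite pl; lia.
    have px := pos_lt x ht.
    have a1 : pos t x <> 0 by move=> e; move/eqP: nx0; apply; apply: (pos_inj ht); rewrite e p0.
    have a2 : pos t x <> n.-1 by move=> e; move/eqP: nxl; apply; apply: (pos_inj ht); rewrite e pl.
    lia.
  have ul : pos u yl = 1.
    case: (pair_pos hu n0l a0l); rewrite u0 //.
    - move=> [_ e]; have : yl = y1 by apply: (pos_inj hu); rewrite e u1.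
      by move=> e2; move: pl; rewrite e2 p1; lia.
    - move=> [e _]; have : yl = x0 by apply: (pos_inj hu); rewrite e u0.
      by move=> e2; move: pl; rewrite e2 p0; lia.
  have e := same_pos hu hT n3 HT u0 T0 ul T1.
  rewrite -eu /T in e.
  have e2 : rev t = rotr n.-1 (rot (pos s x0) s) by rewrite e rotK.
  have e3 : t = rot n.-1 (rotr (pos s x0) (rev s)) by rewrite -rev_rot -rev_rotr -e2 revK.
  rewrite /rotr in e3; move: e3; rewrite rot_rot_add => e3.
  by exists (rot_add (rev s) (size (rev s) - pos s x0) n.-1); right.
- move=> [e _]; have : y1 = x0 by apply: (pos_inj hu); rewrite e u0.
  by move=> e2; move: p1; rewrite e2 p0.
Qed.

End Adj.

Section Main.
Variable X : finType.
Local Notation n := #|X|.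
Implicit Types (s t u v w T : seq X) (x y z : X) (A B K I J : {set X}).

Lemma compat_of I K : compatible (split_of I) (split_of K) -> compatS I K.
Proof.
move=> [A [B [hA hB e]]]; move: hA hB e; rewrite !inE => /orP [] /eqP -> /orP [] /eqP -> e.
- constructor 3 => x xI; apply/negP => xK.
  have : x \in I :&: K by rewrite inE xI xK.
  by rewrite e inE.
- constructor 2 => x xI; apply/negPn/negP => xK.
  have : x \in I :&: ~: K by rewrite !inE xI xK.
  by rewrite e inE.
- constructor 1 => x xK; apply/negPn/negP => xI.
  have : x \in ~: I :&: K by rewrite !inE xI xK.
  by rewrite e inE.
- constructor 4 => x xI; apply/negPn/negP => xK.
  have : x \in ~: I :&: ~: K by rewrite !inE xI xK.
  by rewrite e inE.
Qed.

Lemma compat_to I K : compatS I K -> compatible (split_of I) (split_of K).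
Proof.
case=> h.
- exists (~: I), K; split; rewrite ?inE ?eqxx ?orbT //.
  by apply/setP => x; rewrite !inE; case: (boolP (x \in K)) => xK; rewrite ?andbF // (h _ xK).
- exists I, (~: K); split; rewrite ?inE ?eqxx ?orbT //.
  by apply/setP => x; rewrite !inE; case: (boolP (x \in I)) => xI; rewrite ?andbF ?(h _ xI).
- exists I, K; split; rewrite ?inE ?eqxx ?orbT //.
  by apply/setP => x; rewrite !inE; case: (boolP (x \in I)) => xI //; rewrite (negbTE (h _ xI)).
- exists (~: I), (~: K); split; rewrite ?inE ?eqxx ?orbT //.
  by apply/setP => x; rewrite !inE; case: (boolP (x \in I)) => xI //=; rewrite (h _ xI).
Qed.

Lemma split_eq K K' : split_of K = split_of K' -> K = K' \/ K = ~: K'.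
Proof.
move=> e; have : K \in split_of K' by rewrite -e !inE eqxx.
by rewrite !inE => /orP [] /eqP ->; [left | right].
Qed.

Lemma interval_nt s k l : is_ordering s -> 0 < l < n ->
  interval s k l != set0 /\ interval s k l != setT.
Proof.
move=> h hl; have hr := ord_rot k h.
have [x px] := pos_surj hr (i := 0) ltac:(lia).
have [y py] := pos_surj hr (i := l) ltac:(lia).
split; first by apply/set0Pn; exists x; rewrite mem_interval // px; lia.
apply/negP => /eqP e; have : y \in interval s k l by rewrite e inE.
by rewrite mem_interval // py ltnn.
Qed.

Lemma split_arc s P : is_ordering s -> circular_split s P ->
  exists K, [/\ P = split_of K, arcA s K, K != set0 & K != setT].
Proof.
move=> h [k [l [l0 ln ->]]]; exists (interval s k l).
have [h1 h2] := interval_nt k h (ltac:(lia) : 0 < l < n).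
by split => //; apply: interval_arc.
Qed.

Lemma arc_split s K : is_ordering s -> arcA s K -> K != set0 -> K != setT ->
  circular_split s (split_of K).
Proof.
move=> h ar h1 h2; have [k [l [l0 ln e]]] := arc_interval h ar h1 h2.
by exists k, l; rewrite -e.
Qed.

Lemma arc_of_split s P K : is_ordering s -> circular_split s P -> P = split_of K -> arcA s K.
Proof.
move=> h cs eP; have [K' [eP' ar _ _]] := split_arc h cs.
by case: (split_eq (etrans (esym eP) eP')) => ->; [| apply: arcA_compl].
Qed.

Lemma twist_arc s k l A : is_ordering s -> l <= n -> arcA s A ->
  compatS (interval s k l) A -> arcA (twist s k l) A.
Proof.
move=> h hl ar cp; rewrite tw_def; apply: arcA_tw => //; first exact: ord_rot.
  exact: arcA_rot.
have -> : [set x | pos (rot k s) x < l] = interval s k l.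
  by apply/setP => x; rewrite inE mem_interval.
exact: cp.
Qed.

Lemma circ_circular S s t : is_ordering s -> circ_equiv s t -> circular S s -> circular S t.
Proof.
move=> h ce cs P PS; have [K [eP ar h1 h2]] := split_arc h (cs P PS).
rewrite eP; apply: arc_split => //; first exact: circ_ord ce.
exact: circ_arc ar.
Qed.

Lemma reach_back S s t : twist_reach S s t -> is_ordering s -> circular S s -> circular S t.
Proof.
elim=> [s1 t1 ce h cs | s1 u1 t1 [k [l [hl1 hl2 cp ce]]] _ IH h cs].
  exact: circ_circular ce cs.
have hw : is_ordering (twist s1 k l) by rewrite tw_def; apply: ord_tw; apply: ord_rot.
apply: IH; first exact: circ_ord ce.
apply: (circ_circular hw ce) => P PS.
have [K [eP ar k1 k2]] := split_arc h (cs P PS).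
rewrite eP; apply: arc_split => //.
apply: twist_arc => //; first lia.
by apply: compat_of; rewrite -eP; apply: cp.
Qed.

End Main.

Definition bP (P : Prop) : bool := if excluded_middle_informative P then true else false.
Lemma bPE P : bP P <-> P.
Proof. by rewrite /bP; case: excluded_middle_informative. Qed.

Section Fwd.
Variable X : finType.
Local Notation n := #|X|.
Implicit Types (s t u v w T : seq X) (x y z : X) (A B K I J : {set X}).

Definition Phi s t := #|[set A : {set X} | bP (arcA s A /\ arcA t A)]|.

Lemma set1_arc s x : arcA s [set x].
Proof. by move=> a b c d; rewrite !inE => /eqP -> _ /eqP ->; rewrite /bet; lia. Qed.

Lemma progress S s t : 3 < n -> is_ordering s -> is_ordering t -> circular S s -> circular S t ->
  ~ circ_equiv s t ->
  exists s', [/\ adm_twist_step S s s', is_ordering s', circular S s' & Phi s t < Phi s' t].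
Proof.
move=> n4 hs ht cs ct nce.
have [x [y [nxy [aty nasy]]]] : exists x y, x != y /\ arcA t [set x; y] /\ ~ arcA s [set x; y].
  apply: NNPP => hh; apply: nce; apply: adj_equiv => //; first by lia.
  move=> x y nxy aty; apply: NNPP => nas; apply: hh; exists x, y; split => //.
have cd0 : candA s t [set x] [set y].
  split; first by apply/set0Pn; exists x; rewrite inE.
  split; first by apply/set0Pn; exists y; rewrite inE.
  split; first by rewrite disjoints1 inE.
  split; first by split; apply: set1_arc.
  split; first by split; apply: set1_arc.
  by split.
pose P k := bP (exists R1 R2, candA s t R1 R2 /\ #|R1 :|: R2| = k).
have exP : exists k, P k by exists #|[set x] :|: [set y]|; apply/bPE; exists [set x], [set y].
have ubP : forall k, P k -> k <= n.
  by move=> k /bPE [R1 [R2 [_ <-]]]; apply: max_card.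
case: (ex_maxnP exP ubP) => k Pk kmax.
move/bPE: Pk => [R1 [R2 [cd ek]]].
have Hmax : forall R1' R2', candA s t R1' R2' -> #|R1' :|: R2'| <= #|R1 :|: R2|.
  by move=> R1' R2' cd'; rewrite ek; apply: kmax; apply/bPE; exists R1', R2'.
have [k' [l [l2 ln cp ar]]] := step hs ht cd Hmax.
have hs' : is_ordering (twist s k' l) by rewrite tw_def; apply: ord_tw; apply: ord_rot.
have pres : forall A, arcA s A -> arcA t A -> arcA (twist s k' l) A.
  by move=> A a1 a2; apply: twist_arc => //; [lia | apply: cp].
exists (twist s k' l); split => //.
- exists k', l; split => //.
    move=> P0 PS; have [K [eP _ _ _]] := split_arc hs (cs P0 PS).
    rewrite eP; apply: compat_to; apply: cp.
      by apply: arc_of_split hs (cs P0 PS) eP.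
    by apply: arc_of_split ht (ct P0 PS) eP.
  by exists 0; left; rewrite rot0.
- move=> P0 PS; have [K [eP aK k1 k2]] := split_arc hs (cs P0 PS).
  rewrite eP; apply: arc_split => //; apply: pres => //.
  by apply: arc_of_split ht (ct P0 PS) eP.
- have [h1 [h2 [h3 [[h4 h4'] [[h5 h5'] [h6 h7]]]]]] := cd.
  apply: proper_card; apply/properP; split.
    apply/subsetP => A; rewrite !inE => /bPE [a1 a2]; apply/bPE; split => //.
    exact: pres.
  exists (R1 :|: R2); rewrite !inE; first by apply/bPE.
  by apply/negP => /bPE [].
Qed.

Lemma reach_fwd S t : 3 < n -> is_ordering t -> circular S t ->
  forall m s, is_ordering s -> circular S s -> #|[set: {set X}]| - Phi s t <= m -> twist_reach S s t.
Proof.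
move=> n4 ht ct; elim=> [|m IH] s hs cs hm;
  (case: (classic (circ_equiv s t)) => ce; first exact: tr_refl);
  have [s' [adm hs' cs' lt]] := progress n4 hs ht cs ct ce.
  have : Phi s' t <= #|[set: {set X}]| by rewrite cardsT; apply: max_card.
  lia.
apply: tr_step adm _; apply: IH => //.
have : Phi s' t <= #|[set: {set X}]| by rewrite cardsT; apply: max_card.
lia.
Qed.

End Fwd.

Theorem theorem3 (X : finType) (hX : 4 <= #|X|)
  (S : {set {set {set X}}}) (pi1 pi2 : seq X)
  (hS : forall P, P \in S -> is_split P)
  (h1 : is_ordering pi1) (h2 : is_ordering pi2)
  (hcirc : circular S pi1) :
  circular S pi2 <-> twist_reach S pi1 pi2.
Proof.
split.
  move=> c2; apply: (reach_fwd hX h2 c2 (m := #|[set: {set X}]|)) => //.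
  exact: leq_subr.
by move=> tr; apply: (reach_back tr h1 hcirc).
Qed.
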